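(* Every forest (in particular every tree) of order $n$ has at most $2^{n/2}$ independent dominating sets. Moreover, there are infinitely many trees $T$ such that, with $n$ the order of $T$, $T$ has at least $\frac{1}{2}2^{n/2}$ independent dominating sets.
   Context: An independent dominating set of $G=(V,E)$ is a set $D\subseteq V$ with no edge inside $D$ such that every vertex outside $D$ has at least one neighbour in $D$. Order = number of vertices. *)

(* Defs.v *)
From mathcomp Require Import all_boot.
Set Implicit Arguments. Unset Strict Implicit. Unset Printing Implicit Defensive.

Definition simple_graph (T : finType) (e : rel T) : Prop :=
  symmetric e /\ irreflexive e.

Definition acyclic (T : finType) (e : rel T) : Prop :=
  forall c : seq T, 3 <= size c -> ~~ ucycleb e c.

Definition forest (T : finType) (e : rel T) : Prop :=
  simple_graph e /\ acyclic e.

Definition tree (T : finType) (e : rel T) : Prop :=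
  forest e /\ 0 < #|T| /\ (forall x y : T, connect e x y).

Definition ids_b (T : finType) (e : rel T) (D : {set T}) : bool :=
  [forall x, forall y, (x \in D) && (y \in D) ==> ~~ e x y] &&
  [forall x, (x \notin D) ==> [exists y, (y \in D) && e x y]].

Definition num_ids (T : finType) (e : rel T) : nat :=
  #|[set D : {set T} | ids_b e D]|.

(* Main.v *)
Require Import Defs.
From mathcomp Require Import all_boot zify.
Set Implicit Arguments. Unset Strict Implicit. Unset Printing Implicit Defensive.

Lemma step (T : finType) (e : rel T) (S : {set T}) :
  symmetric e -> irreflexive e -> acyclic e ->
  forall x w q, path e x (w :: q) -> uniq (x :: w :: q) -> all (mem S) (x :: w :: q) ->
  (exists v u, [/\ v \in S, u \in S, e v u & forall y, y \in S -> e v y -> y = u])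
  \/ (exists y, [/\ y \in S, e y x & y \notin x :: w :: q]).
Proof.
move=> esym eirr eacy x w q Hp Hu Ha.
case: (boolP [exists y, (y \in S) && e x y && (y != w)]) => [/existsP[y /andP[/andP[yS exy] ynw]]|Hno].
- right; case: (boolP (y \in x :: w :: q)) => Hyin; last by exists y; split; rewrite // esym.
  exfalso.
  have ynx : y != x by apply/eqP=> yx; move: exy; rewrite yx eirr.
  move: Hyin; rewrite in_cons (negbTE ynx) /= in_cons (negbTE ynw) /= => yq.
  case/splitPr: yq Hp Hu => q1 q2 Hp Hu.
  have := eacy (x :: w :: rcons q1 y); rewrite /= size_rcons => /(_ isT) /negP; apply.
  rewrite /ucycleb; apply/andP; split.
  + rewrite (_ : cycle e _ = path e x (rcons (rcons (w :: q1) y) x)) //.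
    rewrite rcons_path last_rcons -esym exy andbT rcons_path.
    move: Hp; rewrite -cat_cons cat_path => /andP[-> /=]; by case/andP.
  + have E : x :: w :: q1 ++ y :: q2 = (x :: w :: rcons q1 y) ++ q2 by rewrite /= -cats1 -catA.
    by move: Hu; rewrite E cat_uniq => /andP[].
- left; exists x, w; split.
  + by move: Ha => /= /andP[].
  + by move: Ha => /= /and3P[].
  + by move: Hp => /= /andP[].
  + move=> y yS exy; apply/eqP; apply: contraNT Hno => ynw; apply/existsP; exists y.
    by rewrite yS exy ynw.
Qed.

Lemma leaf (T : finType) (e : rel T) (S : {set T}) :
  symmetric e -> irreflexive e -> acyclic e ->
  forall x w, x \in S -> w \in S -> e x w ->
  exists v u, [/\ v \in S, u \in S, e v u & forall y, y \in S -> e v y -> y = u].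
Proof.
move=> es ei ea.
suff H : forall k x w q, #|T| - size q <= k -> path e x (w :: q) -> uniq (x :: w :: q) ->
    all (mem S) (x :: w :: q) ->
    exists v u, [/\ v \in S, u \in S, e v u & forall y, y \in S -> e v y -> y = u].
  move=> x w xS wS exw; apply: (H #|T| x w [::]) => //=.
  + by rewrite subn0.
  + by rewrite exw.
  + rewrite inE andbT; apply/eqP=> xw; by move: exw; rewrite xw ei.
  + by rewrite xS wS.
elim=> [|k IH] x w q Hk Hp Hu Ha; case: (step es ei ea Hp Hu Ha) => // [[y [yS eyx ynin]]].
- exfalso.
  have U : uniq (y :: x :: w :: q) by rewrite cons_uniq ynin Hu.
  have := max_card (mem (y :: x :: w :: q)); rewrite (card_uniqP U) /= => HH; move: Hk; rewrite leqn0 subn_eq0 => Hk; have := leq_trans HH Hk; rewrite ltnNge; by rewrite ltnW // ltnW.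
- apply: (IH y x (w :: q)).
  + move: Hk => /=; lia.
  + by apply/andP; split.
  + by rewrite cons_uniq ynin Hu.
  + by apply/andP; split.
Qed.

Definition good (T : finType) (e : rel T) (S D : {set T}) : bool :=
  [&& D \subset S, [forall x, forall y, (x \in D) && (y \in D) ==> ~~ e x y] &
      [forall x, (x \in S) && (x \notin D) ==> [exists y, (y \in D) && e x y]]].
Definition cnt (T : finType) (e : rel T) (S : {set T}) := #|[set D | good e S D]|.

Lemma goodP (T : finType) (e : rel T) (S D : {set T}) :
  reflect [/\ D \subset S, forall x y, x \in D -> y \in D -> ~~ e x y &
             forall x, x \in S -> x \notin D -> exists2 y, y \in D & e x y]
          (good e S D).
Proof.
apply: (iffP and3P) => [[H1 /forallP H2 /forallP H3]|[H1 H2 H3]]; split=> //.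
- move=> x y xD yD; move: (H2 x) => /forallP /(_ y); by rewrite xD yD.
- move=> x xS xD; move: (H3 x); rewrite xS xD => /existsP [y /andP[yD exy]]; by exists y.
- apply/forallP=> x; apply/forallP=> y; apply/implyP=> /andP[xD yD]; exact: H2.
- apply/forallP=> x; apply/implyP=> /andP[xS xD]; have [y yD exy] := H3 x xS xD.
  by apply/existsP; exists y; rewrite yD.
Qed.

Lemma noedge (T : finType) (e : rel T) (S : {set T}) :
  (forall x y, x \in S -> y \in S -> ~~ e x y) -> cnt e S <= 1.
Proof.
move=> H; rewrite /cnt -(cards1 S); apply: subset_leq_card; apply/subsetP=> D.
rewrite !inE => /goodP [sDS _ Hd]; apply/eqP/setP=> x.
apply/idP/idP; first by move/(subsetP sDS).
move=> xS; apply: contraT => xD; have [y yD exy] := Hd x xS xD.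
by move: (H x y xS (subsetP sDS y yD)); rewrite exy.
Qed.

Lemma cnt_bound (T : finType) (e : rel T) :
  symmetric e -> irreflexive e -> acyclic e ->
  forall n (S : {set T}), #|S| <= n -> cnt e S ^ 2 <= 2 ^ #|S|.
Proof.
move=> es ei ea; elim=> [|n IH] S hS.
  have : cnt e S <= 1.
    apply: noedge => x y xS _; exfalso.
    by move: hS; rewrite leqn0 => /eqP/cards0_eq Z; move: xS; rewrite Z inE.
  by case: (cnt e S) => [|[|]] //; rewrite expn_gt0.
case: (boolP [exists x, exists y, [&& x \in S, y \in S & e x y]]); last first.
  move=> Hn; have : cnt e S <= 1.
    apply: noedge => x y xS yS; apply: contraNN Hn => exy.
    by apply/existsP; exists x; apply/existsP; exists y; rewrite xS yS.
  by case: (cnt e S) => [|[|]] //; rewrite expn_gt0.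
case/existsP=> x /existsP [w /and3P[xS wS exw]].
have [v [u [vS uS evu Hl]]] := leaf es ei ea xS wS exw.
have vu : v != u by apply/eqP=> E; move: evu; rewrite E ei.
set Sv := S :\: [set v; u].
set Su := S :\: (u |: [set y | e u y]).
have cSv : #|Sv| + 2 = #|S|.
  have sub : [set v; u] \subset S by apply/subsetP=> z; rewrite !inE => /orP[]/eqP->.
  by rewrite -(cardsID [set v; u] S) (setIidPr sub) cards2 vu addnC.
have SuSv : Su \subset Sv.
  apply/subsetP=> z; rewrite !inE => /andP[/norP[zu nuz] zS].
  rewrite zS (negbTE zu) andbT orbF; apply: contraNN nuz => /eqP ->; by rewrite es.
have cSu : #|Su| <= #|Sv| by apply: subset_leq_card.
have IHv : cnt e Sv ^ 2 <= 2 ^ #|Sv| by apply: IH; move: hS; rewrite -cSv; lia.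
have IHu : cnt e Su ^ 2 <= 2 ^ #|Su| by apply: IH; move: hS; rewrite -cSv; lia.
have split : cnt e S <= cnt e Sv + cnt e Su.
  rewrite /cnt -(cardsID [set D : {set T} | v \in D]); apply: leq_add.
  - rewrite -(card_in_imset (f := fun D : {set T} => D :\ v)); last first.
      by move=> D1 D2; rewrite !inE => /andP[_ v1] /andP[_ v2] E; rewrite -(setD1K v1) E setD1K.
    apply: subset_leq_card; apply/subsetP=> _ /imsetP[D HD ->]; move: HD; rewrite !inE => /andP[/goodP[sDS Hi Hd] vD].
    apply/goodP; split.
    + apply/subsetP=> z; rewrite !inE => /andP[zv zD]; rewrite (negbTE zv) (subsetP sDS z zD) andbT /=.
      apply/eqP=> zu; move: (Hi v z vD zD); by rewrite zu evu.
    + by move=> a b; rewrite !inE => /andP[_ aD] /andP[_ bD]; apply: Hi.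
    + move=> z; rewrite !inE => /andP[/norP[zv zu] zS]; rewrite zv /= => zD.
      have [y yD ezy] := Hd z zS zD; exists y => //; rewrite in_setD1 yD andbT.
      apply/eqP=> yv; move: ezy; rewrite yv es => /(Hl z zS) /eqP; by rewrite (negbTE zu).
  - rewrite -(card_in_imset (f := fun D : {set T} => D :\ u)); last first.
      move=> D1 D2; rewrite !inE => /andP[v1 /goodP[s1 _ H1]] /andP[v2 /goodP[s2 _ H2]] E.
      have u1 : u \in D1 by have [y yD evy] := H1 v vS v1; rewrite -(Hl y (subsetP s1 y yD) evy).
      have u2 : u \in D2 by have [y yD evy] := H2 v vS v2; rewrite -(Hl y (subsetP s2 y yD) evy).
      by rewrite -(setD1K u1) E setD1K.
    apply: subset_leq_card; apply/subsetP=> _ /imsetP[D HD ->]; move: HD; rewrite !inE => /andP[vD /goodP[sDS Hi Hd]].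
    have uD : u \in D by have [y yD evy] := Hd v vS vD; rewrite -(Hl y (subsetP sDS y yD) evy).
    apply/goodP; split.
    + apply/subsetP=> z; rewrite !inE => /andP[zu zD]; rewrite (negbTE zu) (subsetP sDS z zD) andbT /=.
      exact: (Hi u z uD zD).
    + by move=> a b; rewrite !inE => /andP[_ aD] /andP[_ bD]; apply: Hi.
    + move=> z; rewrite !inE => /andP[/norP[zu nuz] zS]; rewrite zu /= => zD.
      have [y yD ezy] := Hd z zS zD; exists y => //; rewrite in_setD1 yD andbT.
      apply/eqP=> yu; move: ezy; rewrite yu es; by rewrite (negbTE nuz).
rewrite -cSv expnD.
have : 2 ^ #|Su| <= 2 ^ #|Sv| by rewrite leq_exp2l.
move: split IHv IHu; set a := cnt e S; set b := cnt e Sv; set c := cnt e Su;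
  set P := 2 ^ #|Sv|; set Q := 2 ^ #|Su|; rewrite !expnS !expn0 !muln1 => H1 H2 H3 H4.
have h1 : a * a <= (b + c) * (b + c) by apply: leq_mul.
have h2 : (b + c) * (b + c) <= 2 * (b * b) + 2 * (c * c).
  case: (leqP b c) => h.
  - have [d ->] : exists d, c = b + d by exists (c - b); lia.
    nia.
  - have [d ->] : exists d, b = c + d by exists (b - c); lia.
    nia.
lia.
Qed.

Lemma num_cnt (T : finType) (e : rel T) : num_ids e = cnt e [set: T].
Proof.
rewrite /num_ids /cnt; apply: eq_card => D; rewrite !inE /ids_b /good subsetT /=.
congr (_ && _); apply: eq_forallb => x; by rewrite in_setT.
Qed.

Lemma part1 (T : finType) (e : rel T) : forest e -> num_ids e ^ 2 <= 2 ^ #|T|.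
Proof.
move=> [[es ei] ea]; rewrite num_cnt -cardsT; exact: (cnt_bound es ei ea (leqnn _)).
Qed.

Lemma cyc_two (T : eqType) (e : rel T) c x : cycle e c -> uniq c -> 3 <= size c -> x \in c ->
  exists y z, [/\ y \in c, z \in c, y != z, e x y & e z x].
Proof.
move=> Hc Hu Hs xc; exists (next c x), (prev c x); split.
- by rewrite mem_next.
- by rewrite mem_prev.
- have [i c' Hr] := rot_to xc.
  have Hu' : uniq (x :: c') by rewrite -Hr rot_uniq.
  have Hs' : 3 <= size (x :: c') by rewrite -Hr size_rot.
  rewrite -(next_rot i Hu) -(prev_rot i Hu) Hr.
  case: c' Hu' Hs' Hr => [|a [|b r]] // Hu' _ Hr.
  apply/eqP => E.
  have E2 : next (x :: a :: b :: r) (prev (x :: a :: b :: r) x) = x by rewrite next_prev.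
  rewrite -E in E2.
  move: Hu'; rewrite /= !inE => /andP[/norP[xa /norP[xb _]] _].
  move: E2; rewrite /= eqxx /= eq_sym (negbTE xa) /= eqxx => bx.
  by move: xb; rewrite bx eqxx.
- exact: next_cycle.
- exact: prev_cycle.
Qed.

Notation V k := (option (option ('I_k * bool))).

Definition adj k (x y : V k) : bool :=
  match x, y with
  | None, Some None => true
  | None, Some (Some (_, true)) => true
  | Some (Some (i, true)), Some (Some (j, false)) => i == j
  | _, _ => false
  end.
Definition ex k : rel (V k) := fun x y => adj x y || adj y x.

Lemma ex_sym k : symmetric (@ex k).
Proof. by move=> x y; rewrite /ex orbC. Qed.

Lemma ex_irr k : irreflexive (@ex k).
Proof. by case=> [[[i []]|]|]. Qed.

Lemma ex_acyclic k : acyclic (@ex k).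
Proof.
move=> cyc Hs; apply/negP => /andP[Hc Hu].
have two : forall x, x \in cyc -> exists y z, [/\ y \in cyc, z \in cyc, y != z, ex x y & ex x z].
  move=> x xc; have [y [z [yc zc yz exy ezx]]] := cyc_two Hc Hu Hs xc.
  by exists y, z; split => //; rewrite ex_sym.
have Hl : forall x w, (forall y, ex x y -> y = w) -> x \notin cyc.
  move=> x w H; apply/negP => xc; have [y [z [_ _ yz exy exz]]] := two x xc.
  by move: yz; rewrite (H y exy) (H z exz) eqxx.
have nl : Some None \notin cyc by apply: (Hl _ None); case=> [[[j []]|]|].
have nb : forall i, Some (Some (i, false)) \notin cyc.
  move=> i; apply: (Hl _ (Some (Some (i, true)))); case=> [[[j []]|]|] //.
  by rewrite /ex /= => /eqP ->.
have na : forall i, Some (Some (i, true)) \notin cyc.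
  move=> i; apply/negP => xc; have [y [z [yc zc yz exy exz]]] := two _ xc.
  have H : forall y, y \in cyc -> ex (Some (Some (i, true))) y -> y = None.
    case=> [[[j []]|]|] jc; rewrite /ex //=.
    by move=> /orP[/eqP Eq|//]; move: jc; rewrite -Eq (negbTE (nb i)).
  by move: yz; rewrite (H y yc exy) (H z zc exz) eqxx.
have nc : None \notin cyc.
  apply/negP => xc; have [y [z [yc zc yz exy exz]]] := two _ xc.
  move: yc exy; case: y {yz} => [[[j []]|]|] yc //.
  - by rewrite (negbTE (na j)) in yc.
  - by rewrite (negbTE nl) in yc.
case: cyc Hs Hc Hu two Hl nl nb na nc => [|x r] // _ _ _ _ _ nl nb na nc.
have : x \in x :: r by rewrite inE eqxx.
by case: x nl nb na nc => [[[j []]|]|] nl nb na nc xc; [move: (na j) | move: (nb j) | move: nl | move: nc]; rewrite xc.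
Qed.

Lemma ex_conn k (x y : V k) : connect (@ex k) x y.
Proof.
have cs := sym_connect_sym (@ex_sym k).
have H : forall x : V k, connect (@ex k) x None.
  case=> [[[j []]|]|].
  - exact: connect1.
  - apply: (connect_trans (y := Some (Some (j, true)))); apply: connect1 => //.
    by rewrite /ex /= ?eqxx ?orbT.
  - exact: connect1.
  - exact: connect0.
apply: (connect_trans (H x)); by rewrite cs.
Qed.

Lemma card_V k : #|{: V k}| = k.*2.+2.
Proof. by rewrite !card_option card_prod card_ord card_bool muln2. Qed.

Definition F k (f : {ffun 'I_k -> bool}) : {set V k} :=
  [set x | match x with None => false | Some None => true | Some (Some (i, b)) => b == f i end].

Lemma F_inj k : injective (@F k).
Proof.
move=> f g E; apply/ffunP => i.
have := congr1 (fun D : {set V k} => Some (Some (i, true)) \in D) E; rewrite /= !inE.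
by case: (f i); case: (g i).
Qed.

Lemma F_ids k f : ids_b (@ex k) (F f).
Proof.
apply/andP; split.
- apply/forallP => x; apply/forallP => y; apply/implyP; rewrite !inE.
  case: x => [[[i []]|]|]; case: y => [[[j []]|]|] //=; rewrite /ex /= ?orbF //.
  + case: (i =P j) => // ->; by case: (f _).
  + by rewrite andbF.
  + case: (j =P i) => // ->; by case: (f _).
- apply/forallP => x; apply/implyP; rewrite inE.
  case: x => [[[i []]|]|] //= H.
  + apply/existsP; exists (Some (Some (i, false))); rewrite inE /ex /= ?eqxx /= ?orbT ?andbT.
    by move: H; case: (f i).
  + apply/existsP; exists (Some (Some (i, true))); rewrite inE /ex /= ?eqxx /= ?orbT ?andbT.
    by move: H; case: (f i).
  + apply/existsP; exists (Some None); by rewrite inE.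
Qed.

Lemma num_lb k : 2 ^ k <= num_ids (@ex k).
Proof.
have -> : 2 ^ k = #|(@F k) @: [set: {ffun 'I_k -> bool}]|.
  by rewrite (card_imset _ (@F_inj k)) cardsT card_ffun card_bool card_ord.
apply: subset_leq_card; apply/subsetP => _ /imsetP[f _ ->]; by rewrite inE F_ids.
Qed.

Theorem mainTheorem17 :
  (forall (T : finType) (e : rel T), forest e -> num_ids e ^ 2 <= 2 ^ #|T|) /\
  (forall N : nat, exists (T : finType) (e : rel T),
      tree e /\ N <= #|T| /\ 2 ^ #|T| <= (2 * num_ids e) ^ 2).
Proof.
split; first exact: part1.
move=> N; exists (V N), (@ex N); split.
  split; first by split; [split; [exact: ex_sym | exact: ex_irr] | exact: ex_acyclic].
  by split; [rewrite card_V | exact: ex_conn].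
rewrite card_V; split; first by rewrite -addnn; lia.
have h := num_lb N.
have -> : 2 ^ N.*2.+2 = (2 * 2 ^ N) ^ 2 by rewrite expnMn -expnM -expnD; congr (2 ^ _); lia.
by rewrite leq_exp2r // leq_mul2l.
Qed.
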